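(* Let $d \ge 1$ be an integer and let $k > 0$. Suppose a random vector $\boldsymbol{w} = (w_1,\ldots,w_d) \in \mathbb{R}^d$ is drawn from a $d$-variate spherically symmetric distribution $\mathcal{D}$. Then for any fixed $\boldsymbol{x}, \boldsymbol{y} \in \mathbb{R}^d$, $$\left|\sum_{i=1}^d w_i x_i - \sum_{i=1}^d w_i y_i\right| \geq k \sum_{i=1}^d |x_i - y_i|$$ holds with probability at least $P_{\boldsymbol{\gamma} \sim \mathcal{D}}\left(|\gamma_1| \geq k\sqrt{d}\right)$, where $\gamma_1$ denotes the first coordinate of $\boldsymbol{\gamma}$.
   Context: A probability distribution $\mathcal{D}$ on $\mathbb{R}^d$ is spherically symmetric if for every $d \times d$ orthogonal matrix $Q$, whenever $\boldsymbol{w} \sim \mathcal{D}$, the vector $Q\boldsymbol{w}$ also has distribution $\mathcal{D}$. *)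

(* Defs.v *)
From HB Require Import structures.
From mathcomp Require Import all_boot all_order all_algebra.
From mathcomp Require Import all_classical all_reals all_analysis.
Set Implicit Arguments. Unset Strict Implicit. Unset Printing Implicit Defensive.
Import Order.TTheory GRing.Theory Num.Theory.
Local Open Scope ring_scope.
Local Open Scope classical_set_scope.

(* Vectors of R^d are represented as d.-tuples of reals; the measurable
   structure on d.-tuple R is the library's product (= Borel) sigma-algebra. *)

Definition orthogonal_mx (R : realType) (d : nat) (Q : 'M[R]_d) : Prop :=
  Q *m Q^T = 1%:M.

Definition mx_act (R : realType) (d : nat) (Q : 'M[R]_d) (w : d.-tuple R)
  : d.-tuple R := [tuple \sum_(j < d) Q i j * tnth w j | i < d].

Definition spherically_symmetric (R : realType) (d : nat)
  (D : probability (d.-tuple R) R) : Prop :=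
  forall Q : 'M[R]_d, orthogonal_mx Q ->
    forall A : set (d.-tuple R), measurable A ->
      D (mx_act Q @^-1` A) = D A.

(* Main.v *)
Require Import Defs.
From HB Require Import structures.
From mathcomp Require Import all_boot all_order all_algebra.
From mathcomp Require Import all_classical all_reals all_analysis.
From mathcomp Require Import ring lra.
Import Order.TTheory GRing.Theory Num.Theory.
Local Open Scope ring_scope.
Local Open Scope classical_set_scope.

Lemma meas_lin (R : realType) (d : nat) (c : 'I_d -> R) (a : R) :
  measurable [set w : d.-tuple R | a <= `|\sum_(i < d) c i * tnth w i| ].
Proof.
have mf : measurable_fun setT (fun w : d.-tuple R => `|\sum_(i < d) c i * tnth w i|).
  apply: measurableT_comp => //.
  apply: measurable_sum => i; apply: measurable_realfun.measurable_funM => //.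
  exact: measurable_tnth.
have := mf measurableT _ (measurable_itv (Interval (BLeft a) (BInfty _ false))).
rewrite setTI; congr measurable; apply/seteqP; split => w /=;
  by rewrite in_itv /= andbT.
Qed.

Lemma sum_delta (R : realType) (d : nat) (i : 'I_d) (f : 'I_d -> R) :
  \sum_(l < d) (i == l)%:R * f l = f i.
Proof.
rewrite (bigD1 i) //= eqxx mul1r big1 ?addr0 // => l hl.
by rewrite eq_sym (negbTE hl) mul0r.
Qed.

Lemma cauchy_l1 (R : realType) (d : nat) (a : 'I_d -> R) :
  (\sum_(i < d) a i) ^+ 2 <= d%:R * \sum_(i < d) a i ^+ 2.
Proof.
have H : 0 <= \sum_(i < d) \sum_(j < d) (a i - a j) ^+ 2.
  by apply: sumr_ge0 => i _; apply: sumr_ge0 => j _; exact: sqr_ge0.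
have E : \sum_(i < d) \sum_(j < d) (a i - a j) ^+ 2 =
   \sum_(i < d) \sum_(j < d) (a i ^+ 2 + a j ^+ 2) - (\sum_(i < d) \sum_(j < d) a i * a j) *+ 2.
  rewrite -sumrMnl -sumrB; apply: eq_bigr => i _.
  rewrite -sumrMnl -sumrB; apply: eq_bigr => j _.
  by rewrite sqrrB -mulr_natr; ring.
have E2 : \sum_(i < d) \sum_(j < d) (a i ^+ 2 + a j ^+ 2) = (d%:R * \sum_(i < d) a i ^+ 2) *+ 2.
  under eq_bigr do rewrite big_split /= sumr_const card_ord.
  rewrite big_split /= sumr_const card_ord mulr2n; congr (_ + _).
    by rewrite sumrMnl mulr_natl.
  by rewrite mulr_natl.
have E3 : \sum_(i < d) \sum_(j < d) a i * a j = (\sum_(i < d) a i) ^+ 2.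
  by rewrite expr2 mulr_suml; apply: eq_bigr => i _; rewrite mulr_sumr.
by move: H; rewrite E E2 E3 -mulrnBl pmulrn_lge0 // subr_ge0.
Qed.

Lemma householder (R : realType) (d : nat) (i0 : 'I_d) (q : 'I_d -> R)
  (hq : \sum_(j < d) q j ^+ 2 = 1) :
  exists Q : 'M[R]_d, orthogonal_mx Q /\ forall j, Q i0 j = q j.
Proof.
pose u := fun j : 'I_d => (i0 == j)%:R - q j.
pose s := \sum_(j < d) u j ^+ 2.
pose c := 2 / s.
have cs : c * c * s = c * 2.
  have [s0|s0] := eqVneq s 0; first by rewrite /c s0 invr0 !mulr0 mul0r.
  by rewrite /c; field.
exists (\matrix_(i, j) ((i == j)%:R - c * u i * u j)).
split.
- apply/matrixP => i j; rewrite !mxE.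
  under eq_bigr do rewrite !mxE.
  have term : forall l : 'I_d, ((i == l)%:R - c * u i * u l) * ((j == l)%:R - c * u j * u l) =
     (i == l)%:R * (j == l)%:R - (i == l)%:R * (c * u j * u l)
     - (j == l)%:R * (c * u i * u l) + (c * c * u i * u j) * u l ^+ 2.
    by move=> l; ring.
  under eq_bigr do rewrite term.
  rewrite big_split /= !sumrB !sum_delta -mulr_sumr -/s eq_sym.
  suff -> : c * c * u i * u j * s = c * u j * u i + c * u i * u j by ring.
  transitivity (c * c * s * (u i * u j)); first by ring.
  by rewrite cs; ring.
- move=> j; rewrite mxE.
  have [s0|s0] := eqVneq s 0.
    have uz : forall l, u l = 0.
      move=> l; apply/eqP; rewrite -sqrf_eq0; apply/eqP.
      move: l isT; apply: psumr_eq0P => //= l _; exact: sqr_ge0.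
    rewrite /c s0 invr0 mulr0 !mul0r subr0; apply/eqP; rewrite -subr_eq0; exact/eqP/uz.
  have hs : s = 1 - 2 * q i0 + 1.
    rewrite /s.
    have t2 : forall l : 'I_d, u l ^+ 2 = (i0 == l)%:R * (i0 == l)%:R - 2 * ((i0 == l)%:R * q l) + q l ^+ 2.
      by move=> l; rewrite /u; ring.
    under eq_bigr do rewrite t2.
    by rewrite big_split /= sumrB -mulr_sumr !sum_delta hq eqxx.
  have cu : c * u i0 = 1.
    move: s0; rewrite /c hs /u eqxx => s0.
    have -> : (true%:R : R) = 1 by [].
    by field.
  by rewrite cu mul1r /u; ring.
Qed.

Lemma l1_le (R : realType) (d : nat) (v : 'I_d -> R) :
  \sum_(i < d) `|v i| <= Num.sqrt (d%:R) * Num.sqrt (\sum_(i < d) v i ^+ 2).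
Proof.
rewrite -sqrtrM // -[X in X <= _]ger0_norm ?sumr_ge0 // -sqrtr_sqr.
apply: ler_wsqrtr.
have := @cauchy_l1 _ _ (fun i => `|v i|).
suff -> : \sum_(i < d) v i ^+ 2 = \sum_(i < d) `|v i| ^+ 2 by [].
by apply: eq_bigr => i _; rewrite real_normK ?num_real.
Qed.

Theorem theorem1 (R : realType) (d : nat) (hd : (1 <= d)%N) (k : R) (hk : 0 < k)
  (D : probability (d.-tuple R) R) (hD : spherically_symmetric D)
  (x y : d.-tuple R) :
  (D [set g : d.-tuple R | (k * Num.sqrt (d%:R) <= `| nth 0 (val g) 0 |)%R ]
   <= D [set w : d.-tuple R |
          (k * (\sum_(i < d) `| tnth x i - tnth y i |)
          <= `| \sum_(i < d) tnth w i * tnth x i - \sum_(i < d) tnth w i * tnth y i |)%R ])%E.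
Proof.
pose i0 : 'I_d := Ordinal hd.
pose v i := tnth x i - tnth y i.
have eqT : forall w : d.-tuple R, \sum_(i < d) tnth w i * tnth x i - \sum_(i < d) tnth w i * tnth y i
   = \sum_(i < d) v i * tnth w i.
  by move=> w; rewrite -sumrB; apply: eq_bigr => i _; rewrite /v; ring.
have nthE : forall g : d.-tuple R, nth 0 (val g) 0 = tnth g i0.
  by move=> g; rewrite (tnth_nth 0).
have nth0 : forall g : d.-tuple R, nth 0 (val g) 0 = \sum_(i < d) (i0 == i)%:R * tnth g i.
  by move=> g; rewrite sum_delta (tnth_nth 0).
set A := [set g : d.-tuple R | _].
set T := [set w : d.-tuple R | _].
have mA : measurable A.
  rewrite /A; under eq_set do rewrite nth0; exact: meas_lin.
have mT : measurable T.
  rewrite /T; under eq_set do rewrite eqT; exact: meas_lin.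
pose nv := Num.sqrt (\sum_(i < d) v i ^+ 2).
have sv0 : 0 <= \sum_(i < d) v i ^+ 2 by apply: sumr_ge0 => i _; exact: sqr_ge0.
have [nv0|nv0] := eqVneq nv 0.
  apply: le_measure; rewrite ?inE //.
  move=> w _; rewrite /T /=.
  have -> : \sum_(i < d) `|tnth x i - tnth y i| = 0.
    apply/eqP; rewrite eq_le sumr_ge0 // andbT.
    by have := @l1_le _ _ v; rewrite -/nv nv0 mulr0.
  by rewrite mulr0.
have nvp : 0 < nv by rewrite lt_neqAle eq_sym nv0 sqrtr_ge0.
pose q i := v i / nv.
have hq : \sum_(j < d) q j ^+ 2 = 1.
  under eq_bigr do rewrite /q expr_div_n.
  rewrite -mulr_suml sqr_sqrtr // divff //.
  by apply/eqP => h; move: nv0; rewrite /nv h sqrtr0 eqxx.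
have [Q [oQ hQ]] := @householder _ _ i0 q hq.
rewrite -(hD Q oQ A mA).
have eP : mx_act Q @^-1` A = [set w | k * Num.sqrt d%:R <= `|\sum_(j < d) q j * tnth w j|].
  have key : forall w, nth 0 (val (mx_act Q w)) 0 = \sum_(j < d) q j * tnth w j.
    move=> w; rewrite nthE /mx_act tnth_mktuple.
    by under eq_bigr do rewrite hQ.
  rewrite /preimage /A; apply: eq_set => w; change ((k * Num.sqrt d%:R <= `|nth 0 (val (mx_act Q w)) 0|) = (k * Num.sqrt d%:R <= `|\sum_(j < d) q j * tnth w j|) :> Prop); by rewrite key.
rewrite eP; apply: le_measure; rewrite ?inE //; first exact: meas_lin.
move=> w /=; rewrite /T /= eqT.
have -> : \sum_(j < d) q j * tnth w j = (\sum_(j < d) v j * tnth w j) / nv.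
  by rewrite mulr_suml; apply: eq_bigr => j _; rewrite /q; ring.
rewrite normrM [`|nv^-1|]gtr0_norm ?invr_gt0 // ler_pdivlMr // => h.
apply: le_trans h; rewrite -mulrA ler_pM2l //.
exact: l1_le.
Qed.
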